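(* Let $Q$ be a right Leibniz algebra which is a weak algebra of quotients of its subalgebra $L$. (1) If $I$ is a nonzero ideal of $Q$, then $I\cap L$ is a nonzero ideal of $L$. (2) If $L$ is semiprime (respectively prime), then so is $Q$.
   Context: A right Leibniz algebra satisfies $[x,[y,z]]=[[x,y],z]-[[x,z],y]$. Ideals: subspaces $I$ with $[I,A]\subseteq I$, $[A,I]\subseteq I$ in the ambient algebra $A$. A Leibniz algebra is semiprime if $[I,I]\ne\{0\}$ for every nonzero ideal $I$, and prime if $[I,J]\neq\{0\}$ for all nonzero ideals $I,J$. $Q$ is a weak algebra of quotients of $L$ if for every $0\ne q\in Q$ there exists $x\in L$ with $0\ne[q,x]\in L$ or $y\in L$ with $0\ne[y,q]\in L$. *)

(* Defs.v *)
From HB Require Import structures.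
From mathcomp Require Import all_boot all_order all_algebra.
Set Implicit Arguments. Unset Strict Implicit. Unset Printing Implicit Defensive.
Import GRing.Theory.
Local Open Scope ring_scope.

Section Leibniz.
Variables (R : fieldType) (V : lmodType R) (br : V -> V -> V).

Definition right_leibniz : Prop :=
  (forall (a : R) (x y z : V), br (a *: x + y) z = a *: br x z + br y z) /\
  (forall (a : R) (x y z : V), br z (a *: x + y) = a *: br z x + br z y) /\
  (forall x y z : V, br x (br y z) = br (br x y) z - br (br x z) y).

Definition subspace (S : V -> Prop) : Prop :=
  S 0 /\ (forall x y, S x -> S y -> S (x + y)) /\ (forall (a : R) x, S x -> S (a *: x)).

Definition subalgebra (L : V -> Prop) : Prop :=
  subspace L /\ (forall x y, L x -> L y -> L (br x y)).

(* I is an ideal of the subalgebra A (A = fun _ => True gives ideals of V) *)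
Definition ideal_of (A I : V -> Prop) : Prop :=
  subspace I /\ (forall x, I x -> A x) /\
  (forall x a, I x -> A a -> I (br x a) /\ I (br a x)).

Definition nonzero (I : V -> Prop) : Prop := exists x, I x /\ x <> 0.

Definition bracket_nonzero (I J : V -> Prop) : Prop :=
  exists x y, I x /\ J y /\ br x y <> 0.

Definition semiprime_on (A : V -> Prop) : Prop :=
  forall I, ideal_of A I -> nonzero I -> bracket_nonzero I I.

Definition prime_on (A : V -> Prop) : Prop :=
  forall I J, ideal_of A I -> ideal_of A J -> nonzero I -> nonzero J ->
    bracket_nonzero I J.

Definition weak_quotients (L : V -> Prop) : Prop :=
  forall q : V, q <> 0 ->
    (exists x, L x /\ br q x <> 0 /\ L (br q x)) \/
    (exists y, L y /\ br y q <> 0 /\ L (br y q)).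

End Leibniz.

(* Main.v *)
Require Import Defs.
From mathcomp Require Import all_boot all_order all_algebra.
Local Open Scope ring_scope.

Theorem proposition3p6 (R : fieldType) (Q : lmodType R) (br : Q -> Q -> Q)
    (L : Q -> Prop) :
  right_leibniz br -> subalgebra br L -> weak_quotients br L ->
  (forall I : Q -> Prop, ideal_of br (fun _ => True) I -> nonzero I ->
     ideal_of br L (fun x => I x /\ L x) /\ nonzero (fun x => I x /\ L x)) /\
  (semiprime_on br L -> semiprime_on br (fun _ => True)) /\
  (prime_on br L -> prime_on br (fun _ => True)).
Proof.
move=> _ [[L0 [LD LZ]] LB] WQ.
have P1 : forall I : Q -> Prop, ideal_of br (fun _ => True) I -> nonzero I ->
     ideal_of br L (fun x => I x /\ L x) /\ nonzero (fun x => I x /\ L x).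
  move=> I [[I0 [ID IZ]] [_ IB]] [q [Iq q0]].
  split.
    split; [split; [by split|split]|split].
    - by move=> x y [? ?] [? ?]; split; auto.
    - by move=> a x [? ?]; split; auto.
    - by move=> x [].
    - move=> x a [Ix Lx] La; have [H1 H2] := IB x a Ix Logic.I.
      by split; split; auto.
  case: (WQ q q0) => [[x [Lx [nz Lb]]]|[y [Ly [nz Lb]]]].
    exists (br q x); split=> //; split=> //; exact: (IB q x Iq Logic.I).1.
  exists (br y q); split=> //; split=> //; exact: (IB q y Iq Logic.I).2.
split=> //; split.
  move=> SP I HI nI; have [HI' nI'] := P1 I HI nI.
  have [x [y [[Ix _] [[Iy _] b]]]] := SP _ HI' nI'.
  by exists x, y.
move=> PR I J HI HJ nI nJ; have [HI' nI'] := P1 I HI nI.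
have [HJ' nJ'] := P1 J HJ nJ.
have [x [y [[Ix _] [[Iy _] b]]]] := PR _ _ HI' HJ' nI' nJ'.
by exists x, y.
Qed.
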